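(* Let $n\ge1$, $m\ge0$ an integer, $m^n=(m,\dots,m)$ ($n$ parts) and $x=(x_1,\dots,x_n)\in\mathbb{C}^n$. Then $$W_{m^n}(x;q,p,t,a,b)=\prod_{j=1}^{\lfloor n/2\rfloor}\frac{(qbt^{n-2j})_{2m}}{(qbt^{-1-n+2j})_{2m}}\prod_{i=1}^n\frac{(x_i^{-1})_{m}(ax_i)_{m}}{(qbx_i)_{m}(qb/(ax_i))_{m}}.$$
   Context: Fix $|p|<1$; parameters generic. $E(x)=(x;p)_\infty(p/x;p)_\infty$. For integer $m\ge0$, $(a)_m=\prod_{k=0}^{m-1}E(aq^k)$, for $m<0$, $(a)_m=1/(aq^m)_{-m}$; for a partition $\lambda$ with $n$ parts $(a)_\lambda=\prod_{i=1}^n(at^{1-i})_{\lambda_i}$; several arguments denote products; integer subscripts denote the single-integer symbol. For $n$-part partitions with $\lambda_1\ge\mu_1\ge\dots\ge\lambda_n\ge\mu_n$, $\lambda_{n+1}=\mu_{n+1}=0$, $H_{\lambda/\mu}(q,p,t,b)=\prod_{1\le i<j\le n}\Big\{\frac{(q^{\mu_i-\mu_{j-1}}t^{j-i})_{\mu_{j-1}-\lambda_j}(q^{\lambda_i+\lambda_j}t^{3-j-i}b)_{\mu_{j-1}-\lambda_j}}{(q^{\mu_i-\mu_{j-1}+1}t^{j-i-1})_{\mu_{j-1}-\lambda_j}(q^{\lambda_i+\lambda_j+1}t^{2-j-i}b)_{\mu_{j-1}-\lambda_j}}\frac{(q^{\lambda_i-\mu_{j-1}+1}t^{j-i-1})_{\mu_{j-1}-\lambda_j}}{(q^{\lambda_i-\mu_{j-1}}t^{j-i})_{\mu_{j-1}-\lambda_j}}\Big\}\prod_{1\le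 i<j-1\le n}\frac{(q^{\mu_i+\lambda_j+1}t^{1-j-i}b)_{\mu_{j-1}-\lambda_j}}{(q^{\mu_i+\lambda_j}t^{2-j-i}b)_{\mu_{j-1}-\lambda_j}}$; for $x\in\mathbb{C}$, $W_{\lambda/\mu}(x;q,p,t,a,b)=H_{\lambda/\mu}\frac{(x^{-1},ax)_\lambda(qbx/t,qb/(axt))_\mu}{(x^{-1},ax)_\mu(qbx,qb/(ax))_\lambda}\prod_{i=1}^n\frac{E(bt^{1-2i}q^{2\mu_i})}{E(bt^{1-2i})}\frac{(bt^{1-2i})_{\mu_i+\lambda_{i+1}}}{(bqt^{-2i})_{\mu_i+\lambda_{i+1}}}t^{i(\mu_i-\lambda_{i+1})}$ (zero if the interlacing fails); recursively $W_{\lambda/\mu}(y,z_1,\dots,z_\ell;q,p,t,a,b)=\sum_\nu W_{\lambda/\nu}(yt^{-\ell};q,p,t,at^{2\ell},bt^\ell)W_{\nu/\mu}(z_1,\dots,z_\ell;q,p,t,a,b)$ over $\nu$ with $\lambda_1\ge\nu_1\ge\dots\ge\lambda_n\ge\nu_n\ge0$; $W_\lambda=W_{\lambda/0}$. *)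

(* Defs.v *)
From Stdlib Require Import Reals List ZArith Arith Bool.
From Coquelicot Require Import Coquelicot.
Import ListNotations.

Local Open Scope C_scope.

Fixpoint Cpow (z : C) (k : nat) : C :=
  match k with O => RtoC 1 | S k' => Cmult z (Cpow z k') end.

Definition Cpowz (z : C) (k : Z) : C :=
  match k with
  | Z0 => RtoC 1
  | Zpos n => Cpow z (Pos.to_nat n)
  | Zneg n => Cinv (Cpow z (Pos.to_nat n))
  end.

Definition Cprod_list (l : list C) : C := fold_right Cmult (RtoC 1) l.
Definition Csum_list (l : list C) : C := fold_right Cplus (RtoC 0) l.

Definition qp_partial (x p : C) (N : nat) : C :=
  Cprod_list (map (fun k => Cminus (RtoC 1) (Cmult x (Cpow p k))) (seq 0 N)).

Definition qp_inf (x p : C) : C :=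
  (real (Lim_seq (fun N => fst (qp_partial x p N))),
   real (Lim_seq (fun N => snd (qp_partial x p N)))).

Definition Etheta (p x : C) : C := qp_inf x p * qp_inf (p / x) p.

Definition epoch (p q a : C) (m : Z) : C :=
  match m with
  | Z0 => RtoC 1
  | Zpos k => Cprod_list (map (fun j => Etheta p (a * Cpow q j)) (seq 0 (Pos.to_nat k)))
  | Zneg k => Cinv (Cprod_list
                 (map (fun j => Etheta p (a * Cpowz q m * Cpow q j)) (seq 0 (Pos.to_nat k))))
  end.

(** i-th part (1-based) of a partition given as a list; 0 beyond the length *)
Definition part (lam : list nat) (i : nat) : Z := Z.of_nat (nth (i - 1) lam 0%nat).

Definition epoch_part (p q t a : C) (lam : list nat) : C :=
  Cprod_list (map (fun i => epoch p q (a * Cpowz t (1 - Z.of_nat i)%Z) (part lam i))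
                  (seq 1 (length lam))).

Definition interlaceb (lam mu : list nat) : bool :=
  andb (length mu =? length lam)%nat
  (forallb (fun i => andb (part lam (i + 1) <=? part mu i)%Z (part mu i <=? part lam i)%Z)
          (seq 1 (length lam))).

Definition Hfac (p q t b : C) (lam mu : list nat) : C :=
  let n := length lam in
  let L := part lam in
  let M := part mu in
  let e := epoch p q in
  Cprod_list (flat_map (fun i => map (fun j =>
     let zi := Z.of_nat i in let zj := Z.of_nat j in
     let d := (M (j - 1)%nat - L j)%Z in
     (e (Cpowz q (M i - M (j - 1)%nat)%Z * Cpowz t (zj - zi)%Z) d
      * e (Cpowz q (L i + L j)%Z * Cpowz t (3 - zj - zi)%Z * b) d)
     / (e (Cpowz q (M i - M (j - 1)%nat + 1)%Z * Cpowz t (zj - zi - 1)%Z) d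
        * e (Cpowz q (L i + L j + 1)%Z * Cpowz t (2 - zj - zi)%Z * b) d)
     * (e (Cpowz q (L i - M (j - 1)%nat + 1)%Z * Cpowz t (zj - zi - 1)%Z) d
        / e (Cpowz q (L i - M (j - 1)%nat)%Z * Cpowz t (zj - zi)%Z) d))
   (seq (i + 1) (n - i))) (seq 1 n))
  * Cprod_list (flat_map (fun i => map (fun j =>
     let zi := Z.of_nat i in let zj := Z.of_nat j in
     let d := (M (j - 1)%nat - L j)%Z in
     e (Cpowz q (M i + L j + 1)%Z * Cpowz t (1 - zj - zi)%Z * b) d
     / e (Cpowz q (M i + L j)%Z * Cpowz t (2 - zj - zi)%Z * b) d)
   (seq (i + 2) (n - i))) (seq 1 n)).

Definition W1 (p q t a b : C) (lam mu : list nat) (x : C) : C :=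
  if interlaceb lam mu then
    let n := length lam in
    let ep := epoch_part p q t in
    Hfac p q t b lam mu
    * (ep (/ x) lam * ep (a * x) lam * ep (q * b * x / t) mu * ep (q * b / (a * x * t)) mu)
    / (ep (/ x) mu * ep (a * x) mu * ep (q * b * x) lam * ep (q * b / (a * x)) lam)
    * Cprod_list (map (fun i =>
        let zi := Z.of_nat i in
        let s := (part mu i + part lam (i + 1))%Z in
        Etheta p (b * Cpowz t (1 - 2 * zi)%Z * Cpowz q (2 * part mu i)%Z)
        / Etheta p (b * Cpowz t (1 - 2 * zi)%Z)
        * (epoch p q (b * Cpowz t (1 - 2 * zi)%Z) s
           / epoch p q (b * q * Cpowz t (- 2 * zi)%Z) s)
        * Cpowz t (zi * (part mu i - part lam (i + 1)))%Z)
      (seq 1 n))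
  else RtoC 0.

Definition candidates (lam : list nat) : list (list nat) :=
  fold_right (fun l acc => flat_map (fun v => map (cons v) acc) (seq 0 (S l))) [[]] lam.

Definition interl (lam : list nat) : list (list nat) :=
  filter (fun nu => interlaceb lam nu) (candidates lam).

Fixpoint Wm (p q t : C) (lam mu : list nat) (xs : list C) (a b : C) {struct xs} : C :=
  match xs with
  | [] => if list_eq_dec Nat.eq_dec lam mu then RtoC 1 else RtoC 0
  | y :: zs =>
      let l := Z.of_nat (length zs) in
      Csum_list (map (fun nu =>
         W1 p q t (a * Cpowz t (2 * l)%Z) (b * Cpowz t l) lam nu (y * Cpowz t (- l)%Z)
         * Wm p q t nu mu zs a b) (interl lam))
  end.

Definition Wpart (p q t : C) (lam : list nat) (xs : list C) (a b : C) : C :=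
  Wm p q t lam (repeat 0%nat (length lam)) xs a b.

Definition monomial (q t a b : C) (xs : list C) (i j k l : Z) (s : list Z) : C :=
  Cpowz q i * Cpowz t j * Cpowz a k * Cpowz b l
  * Cprod_list (map (fun xz => Cpowz (fst xz) (snd xz)) (combine xs s)).

Definition generic (p q t a b : C) (xs : list C) : Prop :=
  q <> RtoC 0 /\ t <> RtoC 0 /\ a <> RtoC 0 /\ b <> RtoC 0 /\
  List.Forall (fun x => x <> RtoC 0) xs /\
  forall (i j k l : Z) (s : list Z), length s = length xs ->
    ~ (i = 0%Z /\ j = 0%Z /\ k = 0%Z /\ l = 0%Z /\ List.Forall (fun z => z = 0%Z) s) ->
    Etheta p (monomial q t a b xs i j k l s) <> RtoC 0.

Definition rhs7 (p q t a b : C) (n m : nat) (xs : list C) : C :=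
  let zn := Z.of_nat n in let zm := Z.of_nat m in
  Cprod_list (map (fun j => let zj := Z.of_nat j in
      epoch p q (q * b * Cpowz t (zn - 2 * zj)%Z) (2 * zm)%Z
      / epoch p q (q * b * Cpowz t (-1 - zn + 2 * zj)%Z) (2 * zm)%Z)
    (seq 1 (Nat.div2 n)))
  * Cprod_list (map (fun x =>
      epoch p q (/ x) zm * epoch p q (a * x) zm
      / (epoch p q (q * b * x) zm * epoch p q (q * b / (a * x)) zm)) xs).

(* Main.v *)
Require Import Defs.
From Stdlib Require Import Reals List ZArith Arith Lia Lra FinFun.
From Coquelicot Require Import Coquelicot.
Import ListNotations.
Open Scope C_scope.
Local Notation Cpw := Defs.Cpow.

Lemma Cpow_add (z : C) a b : Cpw z (a + b) = Cpw z a * Cpw z b.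
Proof. induction a; simpl. ring. rewrite IHa. ring. Qed.

Lemma Cpw_nz (z : C) a : z <> 0%R -> Cpw z a <> 0%R.
Proof. intros H; induction a; simpl. exact C1_nz. now apply Cmult_neq_0. Qed.

Lemma Cpowz_nat (z : C) a : Cpowz z (Z.of_nat a) = Cpw z a.
Proof. destruct a. reflexivity. simpl. now rewrite SuccNat2Pos.id_succ. Qed.

Lemma Cpowz_diff (z : C) a b : z <> 0%R -> Cpowz z (Z.of_nat a - Z.of_nat b) = Cpw z a / Cpw z b.
Proof.
  intros Hz. destruct (le_lt_dec b a) as [H|H].
  - replace a with (b + (a - b))%nat by lia.
    replace (Z.of_nat (b + (a-b)) - Z.of_nat b)%Z with (Z.of_nat (a-b)) by lia.
    rewrite Cpowz_nat, Cpow_add. field. now apply Cpw_nz.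
  - replace b with (a + S (b - a - 1))%nat by lia.
    replace (Z.of_nat a - Z.of_nat (a + S (b-a-1)))%Z with (Zneg (Pos.of_succ_nat (b-a-1))) by lia.
    simpl Cpowz. rewrite SuccNat2Pos.id_succ, Cpow_add. field. split; now apply Cpw_nz.
Qed.

Lemma Z_as_diff (u : Z) : u = (Z.of_nat (Z.to_nat u) - Z.of_nat (Z.to_nat (-u)))%Z.
Proof. lia. Qed.

Lemma Cpowz_add (z : C) u v : z <> 0%R -> Cpowz z (u + v) = Cpowz z u * Cpowz z v.
Proof.
  intros Hz. rewrite (Z_as_diff u), (Z_as_diff v).
  set (a := Z.to_nat u). set (b := Z.to_nat (-u)). set (c := Z.to_nat v). set (d := Z.to_nat (-v)).
  replace (Z.of_nat a - Z.of_nat b + (Z.of_nat c - Z.of_nat d))%Z with (Z.of_nat (a + c) - Z.of_nat (b + d))%Z by lia.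
  rewrite !Cpowz_diff, !Cpow_add by auto. field. split; now apply Cpw_nz.
Qed.

Lemma Cinv_nz (z : C) : z <> 0%R -> / z <> 0%R.
Proof. intros H E. apply C1_nz. rewrite <- (Cinv_l z H), E. ring. Qed.

Lemma Cpowz_nz (z : C) u : z <> 0%R -> Cpowz z u <> 0%R.
Proof. intros Hz. rewrite (Z_as_diff u), Cpowz_diff by auto.
  unfold Cdiv. apply Cmult_neq_0. now apply Cpw_nz. apply Cinv_nz. now apply Cpw_nz. Qed.

Lemma Cpowz_0 (z : C) : Cpowz z 0 = 1.
Proof. reflexivity. Qed.

Lemma Cpowz_1 (z : C) : Cpowz z 1 = z.
Proof. simpl. ring. Qed.

Lemma Cpowz_opp (z : C) u : z <> 0%R -> Cpowz z (- u) = / Cpowz z u.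
Proof. intros Hz. assert (H := Cpowz_add z u (-u) Hz). replace (u + - u)%Z with 0%Z in H by lia.
  rewrite Cpowz_0 in H. assert (Cpowz z u <> 0%R) by now apply Cpowz_nz.
  replace (Cpowz z (-u)) with (/ Cpowz z u * (Cpowz z u * Cpowz z (-u))) by (field; auto).
  rewrite <- H. field. auto. Qed.

Lemma Cprod_app (l1 l2 : list C) : Cprod_list (l1 ++ l2) = Cprod_list l1 * Cprod_list l2.
Proof. induction l1; simpl. ring. rewrite IHl1. ring. Qed.

Lemma Cprod_cons x l : Cprod_list (x :: l) = x * Cprod_list l.
Proof. reflexivity. Qed.
Lemma Cprod_nil : Cprod_list [] = RtoC 1.
Proof. reflexivity. Qed.

Lemma Cprod_all1 (l : list C) : (forall x, In x l -> x = RtoC 1) -> Cprod_list l = RtoC 1.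
Proof. induction l; simpl; intros H. reflexivity. rewrite (H a) by auto. rewrite IHl by auto. ring. Qed.

Lemma Cprod_nz (l : list C) : (forall x, In x l -> x <> 0%R) -> Cprod_list l <> 0%R.
Proof. induction l; simpl; intros H. exact C1_nz. apply Cmult_neq_0; auto. Qed.

Lemma Csum_all0 (l : list C) : (forall x, In x l -> x = 0%R) -> Csum_list l = 0%R.
Proof. induction l; simpl; intros H. reflexivity. rewrite (H a) by auto. rewrite IHl by auto. ring. Qed.

Lemma Cprod_map_div {A} (f g : A -> C) l : (forall x, In x l -> g x <> 0%R) ->
  Cprod_list (map (fun i => f i / g i) l) = Cprod_list (map f l) / Cprod_list (map g l).
Proof. induction l; simpl; intros H. { field; try exact C1_nz. }
  rewrite IHl by auto. field. split. apply Cprod_nz. intros x Hx. apply in_map_iff in Hx.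
  destruct Hx as [y [<- Hy]]. auto. auto. Qed.

Lemma Csum_single {A} (F : A -> C) l x0 : NoDup l -> In x0 l ->
  (forall x, In x l -> x <> x0 -> F x = 0%R) -> Csum_list (map F l) = F x0.
Proof.
  induction l as [|x l IH]; simpl; intros Hd Hin H. contradiction.
  inversion Hd; subst. destruct Hin as [<-|Hin].
  - rewrite Csum_all0. ring. intros z Hz. apply in_map_iff in Hz. destruct Hz as [w [<- Hw]].
    apply H; auto. intros ->. contradiction.
  - rewrite H. rewrite IH; auto. ring. auto. intros ->. contradiction.
Qed.

Section Params.
Variables (p q t a b : C).

Definition eprod (c : C) (N : nat) : C :=
  Cprod_list (map (fun j => Etheta p (c * Cpw q j)) (seq 0 N)).

Lemma epoch_nat c N : epoch p q c (Z.of_nat N) = eprod c N.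
Proof. destruct N. reflexivity. simpl. now rewrite SuccNat2Pos.id_succ. Qed.

Lemma eprod_S c N : eprod c (S N) = eprod c N * Etheta p (c * Cpw q N).
Proof. unfold eprod. rewrite seq_S, map_app, Cprod_app. simpl. ring. Qed.

Lemma eprod_Sl c N : eprod c (S N) = Etheta p c * eprod (c * q) N.
Proof. unfold eprod. simpl. rewrite <- seq_shift, map_map.
  replace (c * 1) with c by ring. f_equal. f_equal. apply map_ext. intros j. simpl. f_equal. ring. Qed.

Lemma eprod_shift c N : Etheta p c <> 0%R ->
  Etheta p (c * Cpw q N) / Etheta p c * eprod c N = eprod (c * q) N.
Proof. intros H. assert (E := eq_trans (eq_sym (eprod_S c N)) (eprod_Sl c N)).
  rewrite <- (Cmult_1_l (eprod (c*q) N)). rewrite <- (Cinv_l _ H), <- Cmult_assoc, <- E.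
  field. auto. Qed.

Lemma eprod_nz c N : (forall j, Etheta p (c * Cpw q j) <> 0%R) -> eprod c N <> 0%R.
Proof. intros H. apply Cprod_nz. intros x Hx. apply in_map_iff in Hx. destruct Hx as [j [<- _]]. auto. Qed.

Hypotheses (Hq : q <> 0%R) (Ht : t <> 0%R) (Ha : a <> 0%R) (Hb : b <> 0%R).

Definition MonoE (y : C) (l s : Z) (c : C) := exists i j k,
  c = Cpowz q i * Cpowz t j * Cpowz a k * Cpowz b l * Cpowz y s.

Section Y.
Variable y : C.
Hypothesis Hy : y <> 0%R.

Lemma mono_mul l1 s1 c1 l2 s2 c2 : MonoE y l1 s1 c1 -> MonoE y l2 s2 c2 -> MonoE y (l1 + l2) (s1 + s2) (c1 * c2).
Proof. intros [i1 [j1 [k1 ->]]] [i2 [j2 [k2 ->]]]. exists (i1+i2)%Z, (j1+j2)%Z, (k1+k2)%Z.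
  rewrite !Cpowz_add by auto. ring. Qed.

Lemma mono_inv l s c : MonoE y l s c -> MonoE y (-l) (-s) (/ c).
Proof. intros [i [j [k ->]]]. exists (-i)%Z, (-j)%Z, (-k)%Z. rewrite !Cpowz_opp by auto.
  field. repeat split; apply Cpowz_nz; auto. Qed.

Lemma mono_div l1 s1 c1 l2 s2 c2 : MonoE y l1 s1 c1 -> MonoE y l2 s2 c2 -> MonoE y (l1 + - l2) (s1 + - s2) (c1 / c2).
Proof. intros. apply mono_mul; auto. now apply mono_inv. Qed.

Lemma mono_q : MonoE y 0 0 q. Proof. exists 1%Z, 0%Z, 0%Z. simpl. ring. Qed.
Lemma mono_t : MonoE y 0 0 t. Proof. exists 0%Z, 1%Z, 0%Z. simpl. ring. Qed.
Lemma mono_a : MonoE y 0 0 a. Proof. exists 0%Z, 0%Z, 1%Z. simpl. ring. Qed.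
Lemma mono_b : MonoE y 1 0 b. Proof. exists 0%Z, 0%Z, 0%Z. simpl. ring. Qed.
Lemma mono_y : MonoE y 0 1 y. Proof. exists 0%Z, 0%Z, 0%Z. simpl. ring. Qed.
Lemma mono_1 : MonoE y 0 0 1. Proof. exists 0%Z, 0%Z, 0%Z. simpl. ring. Qed.
Lemma mono_tz z : MonoE y 0 0 (Cpowz t z). Proof. exists 0%Z, z, 0%Z. simpl. ring. Qed.
Lemma mono_qz z : MonoE y 0 0 (Cpowz q z). Proof. exists z, 0%Z, 0%Z. simpl. ring. Qed.
Lemma mono_qn n : MonoE y 0 0 (Cpw q n). Proof. rewrite <- Cpowz_nat. apply mono_qz. Qed.

End Y.
End Params.


Lemma interl_spec lam nu : interlaceb lam nu = true ->
  length nu = length lam /\ forall i, (1 <= i <= length lam)%nat ->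
  (part lam (i + 1) <= part nu i <= part lam i)%Z.
Proof.
  unfold interlaceb. intros H. apply andb_prop in H. destruct H as [H1 H2].
  split. now apply Nat.eqb_eq. intros i Hi. rewrite forallb_forall in H2.
  specialize (H2 i). rewrite in_seq in H2. specialize (H2 ltac:(lia)).
  apply andb_prop in H2. destruct H2 as [A B]. apply Z.leb_le in A, B. lia.
Qed.

Lemma interl_intro lam nu : length nu = length lam -> (forall i, (1 <= i <= length lam)%nat ->
  (part lam (i + 1) <= part nu i <= part lam i)%Z) -> interlaceb lam nu = true.
Proof.
  intros H1 H2. unfold interlaceb. apply andb_true_intro. split. now apply Nat.eqb_eq.
  apply forallb_forall. intros i Hi. rewrite in_seq in Hi. specialize (H2 i ltac:(lia)).
  apply andb_true_intro. split; apply Z.leb_le; lia.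
Qed.

Lemma cand_in lam : forall nu, length nu = length lam ->
  (forall i, nth i nu 0 <= nth i lam 0)%nat -> In nu (candidates lam).
Proof.
  induction lam as [|l lam IH]; intros nu Hl Hi.
  - destruct nu; [left; reflexivity | discriminate].
  - destruct nu as [|v nu]; [discriminate|].
    change (candidates (l::lam)) with (flat_map (fun v => map (cons v) (candidates lam)) (seq 0 (S l))).
    apply in_flat_map. exists v. split.
    + apply in_seq. specialize (Hi 0%nat). simpl in Hi. lia.
    + apply in_map. apply IH. simpl in Hl; lia. intros i. apply (Hi (S i)).
Qed.

Lemma cand_nodup lam : NoDup (candidates lam).
Proof.
  induction lam as [|l lam IH]. simpl. constructor. easy. constructor.
  change (candidates (l::lam)) with (flat_map (fun v => map (cons v) (candidates lam)) (seq 0 (S l))).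
  generalize (seq_NoDup (S l) 0). generalize (seq 0 (S l)). intros vs Hvs.
  induction vs as [|v vs IHv]; simpl. constructor. inversion Hvs; subst.
  apply NoDup_app.
  - apply Injective_map_NoDup; auto. intros x y H; now injection H.
  - auto.
  - intros w Hw Hw'. apply in_map_iff in Hw. destruct Hw as [u [<- _]].
    apply in_flat_map in Hw'. destruct Hw' as [v' [Hv' Hu]]. apply in_map_iff in Hu.
    destruct Hu as [u' [E _]]. injection E; intros; subst. contradiction.
Qed.

Lemma nth_repeat0 N i : nth i (repeat 0%nat N) 0%nat = 0%nat.
Proof. revert i; induction N; intros [|i]; simpl; auto. Qed.

Section Zero.
Variables (p q t : C) (N : nat).

Lemma Wm_zero zs : forall nu a b j, (length zs < j)%nat -> (0 < nth (j - 1) nu 0)%nat ->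
  Wm p q t nu (repeat 0%nat N) zs a b = 0%R.
Proof.
  induction zs as [|y zs IH]; intros nu a b j Hj Hnu.
  - simpl. destruct (list_eq_dec Nat.eq_dec nu (repeat 0%nat N)) as [E|E]; auto.
    rewrite E, nth_repeat0 in Hnu. lia.
  - cbn [Wm]. apply Csum_all0. intros x Hx. apply in_map_iff in Hx.
    destruct Hx as [nu' [<- Hnu']]. unfold interl in Hnu'. apply filter_In in Hnu'.
    destruct Hnu' as [_ Hi]. apply interl_spec in Hi. destruct Hi as [Hlen Hi].
    simpl in Hj. assert (j - 1 < length nu)%nat.
    { destruct (le_lt_dec (length nu) (j-1)); auto. rewrite nth_overflow in Hnu; lia. }
    specialize (Hi (j - 1)%nat ltac:(lia)). unfold part in Hi.
    replace (j - 1 + 1 - 1)%nat with (j - 1)%nat in Hi by lia.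
    rewrite (IH nu' _ _ (j - 1)%nat). ring. lia. lia.
Qed.
End Zero.

Section Lam.
Variables (m n : nat).
Definition lamk (k : nat) : list nat := repeat m k ++ repeat 0%nat (n - k).

Lemma lamk_len k : (k <= n)%nat -> length (lamk k) = n.
Proof. intros. unfold lamk. rewrite length_app, !repeat_length. lia. Qed.

Lemma nth_lamk k i : nth i (lamk k) 0%nat = if (i <? k)%nat then m else 0%nat.
Proof. unfold lamk. destruct (Nat.ltb_spec i k).
  - rewrite app_nth1 by (rewrite repeat_length; lia). now apply nth_repeat_lt.
  - rewrite app_nth2 by (rewrite repeat_length; lia). apply nth_repeat0. Qed.

Lemma part_lamk k i : (1 <= i)%nat -> part (lamk k) i = if (i <=? k)%nat then Z.of_nat m else 0%Z.
Proof. intros. unfold part. rewrite nth_lamk. destruct (Nat.ltb_spec (i-1) k), (Nat.leb_spec i k); try lia; reflexivity. Qed.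

Lemma lamk_interl k : (1 <= k <= n)%nat -> interlaceb (lamk k) (lamk (k - 1)) = true.
Proof. intros Hk. apply interl_intro. rewrite !lamk_len; lia.
  intros i Hi. rewrite lamk_len in Hi by lia. rewrite !part_lamk by lia.
  destruct (Nat.leb_spec (i+1) k), (Nat.leb_spec i (k-1)), (Nat.leb_spec i k); lia. Qed.

Lemma lamk_unique k x : (1 <= k <= n)%nat -> interlaceb (lamk k) x = true -> nth (k - 1) x 0%nat = 0%nat ->
  x = lamk (k - 1).
Proof. intros Hk Hi H0. apply interl_spec in Hi. destruct Hi as [Hl Hi]. rewrite lamk_len in * by lia.
  apply nth_ext with 0%nat 0%nat. rewrite lamk_len; lia.
  intros i Hin. rewrite nth_lamk. specialize (Hi (S i) ltac:(lia)).
  rewrite !part_lamk in Hi by lia. unfold part in Hi. replace (S i - 1)%nat with i in Hi by lia.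
  destruct (Nat.ltb_spec i (k-1)).
  - destruct (Nat.leb_spec (S i + 1) k), (Nat.leb_spec (S i) k); lia.
  - destruct (Nat.eq_dec i (k-1)). subst; auto.
    destruct (Nat.leb_spec (S i + 1) k), (Nat.leb_spec (S i) k); lia.
Qed.

Lemma Wm_step (p q t y a b : C) zs k : (1 <= k <= n)%nat -> length zs = (k - 1)%nat ->
  Wm p q t (lamk k) (repeat 0%nat n) (y :: zs) a b =
  W1 p q t (a * Cpowz t (2 * Z.of_nat (length zs))%Z) (b * Cpowz t (Z.of_nat (length zs)))
     (lamk k) (lamk (k - 1)) (y * Cpowz t (- Z.of_nat (length zs))%Z)
  * Wm p q t (lamk (k - 1)) (repeat 0%nat n) zs a b.
Proof.
  intros Hk Hz. cbn [Wm].
  apply (Csum_single (fun nu => W1 p q t (a * Cpowz t (2 * Z.of_nat (length zs))%Z) (b * Cpowz t (Z.of_nat (length zs)))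
     (lamk k) nu (y * Cpowz t (- Z.of_nat (length zs))%Z) * Wm p q t nu (repeat 0%nat n) zs a b)).
  - apply NoDup_filter, cand_nodup.
  - apply filter_In. split; [|now apply lamk_interl]. apply cand_in. rewrite !lamk_len; lia.
    intros i. rewrite !nth_lamk. destruct (Nat.ltb_spec i (k-1)), (Nat.ltb_spec i k); lia.
  - intros x Hx Hne. apply filter_In in Hx. destruct Hx as [_ Hx].
    rewrite (Wm_zero p q t n zs x a b k). ring. lia.
    destruct (Nat.eq_dec (nth (k-1) x 0%nat) 0%nat). exfalso. apply Hne. now apply lamk_unique. lia.
Qed.
End Lam.

Section Main.
Variables (p q t a b : C) (m n : nat).
Hypotheses (Hq : q <> 0%R) (Ht : t <> 0%R) (Ha : a <> 0%R) (Hb : b <> 0%R).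

Lemma C_div11 : (RtoC 1 * RtoC 1) / (RtoC 1 * RtoC 1) * (RtoC 1 / RtoC 1) = RtoC 1.
Proof. field. Qed.

Lemma Hfac_lamk (B : C) l : (S l <= n)%nat -> Hfac p q t B (lamk m n (S l)) (lamk m n l) = 1.
Proof.
  intros Hl. unfold Hfac. cbv zeta. rewrite lamk_len by lia.
  assert (Hp : forall j, (2 <= j)%nat -> (part (lamk m n l) (j - 1) - part (lamk m n (S l)) j = 0)%Z).
  { intros j Hj. rewrite !part_lamk by lia. destruct (Nat.leb_spec (j-1) l), (Nat.leb_spec j (S l)); lia. }
  rewrite !Cprod_all1. ring.
  - intros x Hx. apply in_flat_map in Hx. destruct Hx as [i [Hi Hx]]. apply in_map_iff in Hx.
    destruct Hx as [j [<- Hj]]. apply in_seq in Hi, Hj. rewrite Hp by lia. cbn [epoch].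
    field.
  - intros x Hx. apply in_flat_map in Hx. destruct Hx as [i [Hi Hx]]. apply in_map_iff in Hx.
    destruct Hx as [j [<- Hj]]. apply in_seq in Hi, Hj. rewrite Hp by lia. cbn [epoch].
    field.
Qed.

Definition EP (c : C) (k : nat) : C :=
  Cprod_list (map (fun i => eprod p q (c * Cpowz t (1 - Z.of_nat i)) m) (seq 1 k)).

Lemma ep_lamk c k : (k <= n)%nat -> epoch_part p q t c (lamk m n k) = EP c k.
Proof.
  intros Hk. unfold epoch_part, EP. rewrite lamk_len by lia.
  replace n with (k + (n - k))%nat at 1 by lia. rewrite seq_app, map_app, Cprod_app.
  rewrite (Cprod_all1 (map _ (seq (1 + k) _))).
  - rewrite Cmult_1_r. f_equal. apply map_ext_in. intros i Hi. apply in_seq in Hi.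
    rewrite part_lamk by lia. replace (i <=? k)%nat with true by (symmetry; apply Nat.leb_le; lia).
    apply epoch_nat.
  - intros x Hx. apply in_map_iff in Hx. destruct Hx as [i [<- Hi]]. apply in_seq in Hi.
    rewrite part_lamk by lia. replace (i <=? k)%nat with false by (symmetry; apply Nat.leb_gt; lia).
    reflexivity.
Qed.

Lemma EP_S c k : EP c (S k) = EP c k * eprod p q (c * Cpowz t (- Z.of_nat k)) m.
Proof. unfold EP. rewrite seq_S, map_app, Cprod_app, map_cons, Cprod_cons. cbn [map]. rewrite Cprod_nil, Cmult_1_r.
  replace (1 - Z.of_nat (1 + k))%Z with (- Z.of_nat k)%Z by lia. reflexivity. Qed.

Lemma EP_shift c c' k : c' * t = c -> EP c (S k) = eprod p q c m * EP c' k.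
Proof. intros Hc. unfold EP. rewrite <- cons_seq, <- seq_shift, map_cons, Cprod_cons, map_map.
  replace (c * Cpowz t (1 - Z.of_nat 1)) with c by (simpl; ring). f_equal. f_equal. apply map_ext. intros i.
  f_equal. rewrite <- Hc. replace (1 - Z.of_nat (S i))%Z with (- Z.of_nat i)%Z by lia.
  replace (1 - Z.of_nat i)%Z with (1 + - Z.of_nat i)%Z by lia. rewrite Cpowz_add, Cpowz_1 by auto. ring.
Qed.

Lemma EP_nz c k : (forall i j, Etheta p (c * Cpowz t (1 - Z.of_nat i) * Cpw q j) <> 0%R) -> EP c k <> 0%R.
Proof. intros H. apply Cprod_nz. intros x Hx. apply in_map_iff in Hx. destruct Hx as [i [<- _]].
  apply eprod_nz. auto. Qed.


Lemma FP_lamk (B : C) l : (S l <= n)%nat ->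
  (forall i, Etheta p (B * Cpowz t (1 - 2 * Z.of_nat i)%Z) <> 0%R) ->
  Cprod_list (map (fun i => Etheta p (B * Cpowz t (1 - 2 * Z.of_nat i)%Z * Cpowz q (2 * part (lamk m n l) i)%Z)
     / Etheta p (B * Cpowz t (1 - 2 * Z.of_nat i)%Z)
     * (epoch p q (B * Cpowz t (1 - 2 * Z.of_nat i)%Z) (part (lamk m n l) i + part (lamk m n (S l)) (i + 1))%Z
        / epoch p q (B * q * Cpowz t (- 2 * Z.of_nat i)%Z) (part (lamk m n l) i + part (lamk m n (S l)) (i + 1))%Z)
     * Cpowz t (Z.of_nat i * (part (lamk m n l) i - part (lamk m n (S l)) (i + 1)))%Z) (seq 1 n))
  = Cprod_list (map (fun i => eprod p q (B * Cpowz t (1 - 2 * Z.of_nat i) * q) (m + m)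
       / eprod p q (B * q * Cpowz t (- 2 * Z.of_nat i)) (m + m)) (seq 1 l)).
Proof.
  intros Hl HE. replace n with (l + (n - l))%nat at 1 by lia. rewrite seq_app, map_app, Cprod_app.
  rewrite (Cprod_all1 (map _ (seq (1 + l) _))).
  - rewrite Cmult_1_r. f_equal. apply map_ext_in. intros i Hi. apply in_seq in Hi.
    rewrite !part_lamk by lia. replace (i <=? l)%nat with true by (symmetry; apply Nat.leb_le; lia).
    replace (i + 1 <=? S l)%nat with true by (symmetry; apply Nat.leb_le; lia).
    replace (2 * Z.of_nat m)%Z with (Z.of_nat (m + m)) by lia.
    replace (Z.of_nat m + Z.of_nat m)%Z with (Z.of_nat (m + m)) by lia.
    replace (Z.of_nat i * (Z.of_nat m - Z.of_nat m))%Z with 0%Z by lia.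
    rewrite Cpowz_0, Cpowz_nat, !epoch_nat, Cmult_1_r.
    rewrite <- (eprod_shift p q) by auto. unfold Cdiv. ring.
  - intros x Hx. apply in_map_iff in Hx. destruct Hx as [i [<- Hi]]. apply in_seq in Hi.
    rewrite !part_lamk by lia. replace (i <=? l)%nat with false by (symmetry; apply Nat.leb_gt; lia).
    replace (i + 1 <=? S l)%nat with false by (symmetry; apply Nat.leb_gt; lia).
    replace (Z.of_nat i * (0 - 0))%Z with 0%Z by lia. replace (2 * 0)%Z with 0%Z by reflexivity.
    replace (0 + 0)%Z with 0%Z by reflexivity. rewrite !Cpowz_0. cbn [epoch]. rewrite (Cmult_1_r (B * _)). field. auto.
Qed.

Definition ff (e : Z) : C := eprod p q (q * b * Cpowz t e) (m + m).
Definition GG (k : nat) : C := Cprod_list (map (fun i => ff (Z.of_nat k - 2 * Z.of_nat i)%Z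
   / ff (Z.of_nat k - 1 - 2 * Z.of_nat i)%Z) (seq 1 (k - 1))).
Definition Xf (x : C) : C := epoch p q (/ x) (Z.of_nat m) * epoch p q (a * x) (Z.of_nat m)
   / (epoch p q (q * b * x) (Z.of_nat m) * epoch p q (q * b / (a * x)) (Z.of_nat m)).

Section Y.
Variable y : C.
Hypothesis Hy : y <> 0%R.
Hypothesis HNZ : forall l s c, MonoE q t a b y l s c -> (l <> 0 \/ s <> 0)%Z -> Etheta p c <> 0%R.

Ltac mono2 := repeat first
  [ apply (mono_q q t a b y) | apply (mono_t q t a b y) | apply (mono_a q t a b y)
  | apply (mono_b q t a b y) | apply (mono_y q t a b y) | apply (mono_1 q t a b y)
  | apply (mono_tz q t a b y) | apply (mono_qz q t a b y) | apply (mono_qn q t a b y)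
  | eapply (mono_div q t a b Hq Ht Ha Hb y Hy) | eapply (mono_mul q t a b Hq Ht Ha Hb y Hy)
  | eapply (mono_inv q t a b Hq Ht Ha Hb y Hy) ].
Ltac nzE := eapply HNZ; [ mono2 | lia ].

Lemma W1_step l : (S l <= n)%nat ->
  W1 p q t (a * Cpowz t (2 * Z.of_nat l)%Z) (b * Cpowz t (Z.of_nat l)) (lamk m n (S l)) (lamk m n l)
     (y * Cpowz t (- Z.of_nat l)%Z) = Xf y * GG (S l).
Proof.
  intros Hl.
  assert (Hint : interlaceb (lamk m n (S l)) (lamk m n l) = true).
  { pose proof (lamk_interl m n (S l)) as H. replace (S l - 1)%nat with l in H by lia. apply H; lia. }
  assert (HT : Cpowz t (Z.of_nat l) <> 0%R) by now apply Cpowz_nz.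
  assert (HT2 : Cpowz t (2 * Z.of_nat l)%Z = Cpowz t (Z.of_nat l) * Cpowz t (Z.of_nat l)).
  { rewrite <- Cpowz_add by auto. f_equal. lia. }
  assert (HTm : Cpowz t (- Z.of_nat l)%Z = / Cpowz t (Z.of_nat l)) by now apply Cpowz_opp.
  unfold W1. rewrite Hint. cbv beta iota zeta.
  rewrite Hfac_lamk, lamk_len, FP_lamk by (auto; intros; nzE).
  rewrite !ep_lamk by lia.
  rewrite (EP_S (/ (y * Cpowz t (- Z.of_nat l)%Z)) l).
  rewrite (EP_S (a * Cpowz t (2 * Z.of_nat l)%Z * (y * Cpowz t (- Z.of_nat l)%Z)) l).
  rewrite (EP_shift _ (q * (b * Cpowz t (Z.of_nat l)) * (y * Cpowz t (- Z.of_nat l)%Z) / t)) by (field; auto).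
  rewrite (EP_shift _ (q * (b * Cpowz t (Z.of_nat l)) / (a * Cpowz t (2 * Z.of_nat l)%Z * (y * Cpowz t (- Z.of_nat l)%Z) * t)))
    by (rewrite HT2, HTm; field; repeat split; auto; apply Cinv_nz; auto).
  replace (/ (y * Cpowz t (- Z.of_nat l)) * Cpowz t (- Z.of_nat l)) with (/ y)
    by (rewrite HTm; field; auto).
  replace (a * Cpowz t (2 * Z.of_nat l) * (y * Cpowz t (- Z.of_nat l)) * Cpowz t (- Z.of_nat l)) with (a * y)
    by (rewrite HT2, HTm; field; auto).
  replace (q * (b * Cpowz t (Z.of_nat l)) * (y * Cpowz t (- Z.of_nat l))) with (q * b * y)
    by (rewrite HTm; field; auto).
  replace (q * (b * Cpowz t (Z.of_nat l)) / (a * Cpowz t (2 * Z.of_nat l) * (y * Cpowz t (- Z.of_nat l))))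
    with (q * b / (a * y)) by (rewrite HT2, HTm; field; repeat split; auto; apply Cinv_nz; auto).
  replace (Cprod_list _) with (GG (S l)).
  2:{ unfold GG. replace (S l - 1)%nat with l by lia. f_equal. apply map_ext. intros i. unfold ff. f_equal.
      - f_equal. replace (Z.of_nat (S l) - 2 * Z.of_nat i)%Z with (Z.of_nat l + (1 - 2 * Z.of_nat i))%Z by lia.
        rewrite Cpowz_add by auto. ring.
      - f_equal. replace (Z.of_nat (S l) - 1 - 2 * Z.of_nat i)%Z with (Z.of_nat l + (-2 * Z.of_nat i))%Z by lia.
        rewrite Cpowz_add by auto. ring. }
  unfold Xf. rewrite !epoch_nat.
  field. repeat split.
  all: first [ apply EP_nz; intros; nzE | apply eprod_nz; intros; nzE ].
Qed.
End Y.
End Main.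

Section Tele.
Variables (p q t a b : C) (m n : nat).
Hypotheses (Hq : q <> 0%R) (Ht : t <> 0%R) (Ha : a <> 0%R) (Hb : b <> 0%R).
Local Notation ff := (ff p q t b m).
Local Notation GG := (GG p q t b m).
Local Notation Xf := (Xf p q a b m).

Definition NZ (y : C) := forall l s c, MonoE q t a b y l s c -> (l <> 0 \/ s <> 0)%Z -> Etheta p c <> 0%R.

Definition TT (k : nat) : C := Cprod_list (map GG (seq 1 k)).

Lemma Wm_lamk k : forall xs, (k <= n)%nat -> length xs = k -> List.Forall (fun y : C => y <> 0%R /\ NZ y) xs ->
  Wm p q t (lamk m n k) (repeat 0%nat n) xs a b = TT k * Cprod_list (map Xf xs).
Proof.
  induction k as [|k IH]; intros xs Hk Hl Hf.
  - destruct xs; [|discriminate]. simpl. unfold lamk. rewrite Nat.sub_0_r. simpl.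
    destruct (list_eq_dec Nat.eq_dec (repeat 0%nat n) (repeat 0%nat n)) as [_|E]; [|now contradiction E].
    unfold TT. simpl. ring.
  - destruct xs as [|y zs]; [discriminate|]. simpl in Hl. injection Hl as Hl.
    inversion Hf as [|? ? [Hy HN] Hf']; subst.
    rewrite (Wm_step m n p q t y a b zs (S (length zs))) by lia.
    replace (S (length zs) - 1)%nat with (length zs) by lia.
    rewrite (W1_step p q t a b m n Hq Ht Ha Hb y Hy HN) by lia.
    rewrite IH by (auto; lia). unfold TT. rewrite seq_S, map_app, Cprod_app. cbn [map].
    rewrite !Cprod_cons, Cprod_nil. replace (1 + length zs)%nat with (S (length zs)) by lia. ring.
Qed.

Hypothesis Hff : forall e, ff e <> 0%R.

Definition AA (k : nat) : C := Cprod_list (map (fun i => ff (Z.of_nat k - 2 * Z.of_nat i)%Z) (seq 1 (k - 1))).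
Definition BB (k : nat) : C := Cprod_list (map (fun i => ff (Z.of_nat k - 1 - 2 * Z.of_nat i)%Z) (seq 1 (k - 1))).

Lemma AA_nz k : AA k <> 0%R.
Proof. apply Cprod_nz. intros x Hx. apply in_map_iff in Hx. destruct Hx as [i [<- _]]. auto. Qed.

Lemma GG_AB k : GG k = AA k / BB k.
Proof. unfold GG, AA, BB. rewrite Cprod_map_div; auto. Qed.

Lemma BB_S k : (1 <= k)%nat -> BB (S k) = AA k * ff (- Z.of_nat k).
Proof. intros Hk. unfold BB, AA. destruct k as [|k]; [lia|].
  replace (S (S k) - 1)%nat with (S k) by lia. replace (S k - 1)%nat with k by lia.
  rewrite seq_S, map_app, Cprod_app. cbn [map]. rewrite Cprod_cons, Cprod_nil, Cmult_1_r. f_equal.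
  - f_equal. apply map_ext. intros i. f_equal. lia.
  - f_equal. lia.
Qed.

Lemma AA_SS k : (1 <= k)%nat -> AA (S (S k)) = ff (Z.of_nat k) * AA k * ff (- Z.of_nat k).
Proof. intros Hk. unfold AA. destruct k as [|k]; [lia|].
  replace (S (S (S k)) - 1)%nat with (S (S k)) by lia. replace (S k - 1)%nat with k by lia.
  rewrite <- cons_seq, <- seq_shift, map_cons, Cprod_cons, map_map.
  rewrite seq_S, map_app, Cprod_app. cbn [map]. rewrite Cprod_cons, Cprod_nil, Cmult_1_r.
  rewrite <- Cmult_assoc. f_equal. f_equal. lia. f_equal.
  - f_equal. apply map_ext. intros i. f_equal. lia.
  - f_equal. lia.
Qed.

Lemma GG_pair k : GG (S k) * GG (S (S k)) = ff (Z.of_nat k) / ff (-1 - Z.of_nat k).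
Proof.
  destruct k as [|k].
  - unfold GG. cbn [seq map Nat.sub]. rewrite Cprod_cons, Cprod_nil.
    replace (Z.of_nat 2 - 2 * Z.of_nat 1)%Z with (Z.of_nat 0) by lia.
    replace (Z.of_nat 2 - 1 - 2 * Z.of_nat 1)%Z with (-1 - Z.of_nat 0)%Z by lia. field. auto.
  - rewrite !GG_AB, (BB_S (S k)), (BB_S (S (S k))), (AA_SS (S k)) by lia.
    replace (-1 - Z.of_nat (S k))%Z with (- Z.of_nat (S (S k)))%Z by lia.
    field. repeat split; auto; apply AA_nz.
Qed.

Definition RR (k : nat) : C := Cprod_list (map (fun j => ff (Z.of_nat k - 2 * Z.of_nat j)%Z
   / ff (-1 - Z.of_nat k + 2 * Z.of_nat j)%Z) (seq 1 (Nat.div2 k))).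

Lemma RR_SS k : RR (S (S k)) = ff (Z.of_nat k) / ff (-1 - Z.of_nat k) * RR k.
Proof. unfold RR. cbn [Nat.div2]. rewrite <- cons_seq, <- seq_shift, map_cons, Cprod_cons, map_map.
  f_equal. f_equal; f_equal; lia. f_equal. apply map_ext. intros j. f_equal; f_equal; lia. Qed.

Lemma TT_RR k : TT k = RR k /\ TT (S k) = RR (S k).
Proof.
  induction k as [|k [IH1 IH2]].
  - split; unfold TT, RR, GG; cbn; ring.
  - split; auto. rewrite RR_SS, <- IH1. unfold TT. rewrite !seq_S, !map_app, !Cprod_app. cbn [map].
    rewrite !Cprod_cons, !Cprod_nil. replace (1 + S k)%nat with (S (S k)) by lia.
    replace (1 + k)%nat with (S k) by lia. rewrite <- GG_pair. ring.
Qed.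
End Tele.

Definition unitv (r : nat) (s : Z) (o len : nat) : list Z :=
  map (fun i => if Nat.eqb i r then s else 0%Z) (seq o len).

Lemma prod_unitv (xs : list C) r s : forall o, Cprod_list (map (fun xz => Cpowz (fst xz) (snd xz))
   (combine xs (unitv r s o (length xs)))) =
   if andb (o <=? r)%nat (r <? o + length xs)%nat then Cpowz (nth (r - o) xs (RtoC 0)) s else RtoC 1.
Proof.
  induction xs as [|x xs IH]; intros o.
  - cbn [combine map]. rewrite Cprod_nil. cbn [length]. destruct (Nat.leb_spec o r), (Nat.ltb_spec r (o + 0)); simpl; auto; lia.
  - unfold unitv in *. cbn [length seq map combine]. rewrite Cprod_cons. cbn [fst snd].
    rewrite IH. destruct (Nat.eqb_spec o r).
    + subst. rewrite Nat.sub_diag. destruct (Nat.leb_spec (S r) r); [lia|].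
      destruct (Nat.leb_spec r r); [|lia]. destruct (Nat.ltb_spec r (r + S (length xs))); [|lia].
      simpl. ring.
    + destruct (Nat.leb_spec (S o) r), (Nat.ltb_spec r (S o + length xs)),
        (Nat.leb_spec o r), (Nat.ltb_spec r (o + S (length xs))); simpl; try lia.
      * replace (r - o)%nat with (S (r - S o)) by lia. simpl. ring.
      * ring.
      * ring.
Qed.

Lemma generic_NZ p q t a b (xs : list C) y : generic p q t a b xs -> In y xs -> NZ p q t a b y.
Proof.
  intros [Hq [Ht [Ha [Hb [Hx Hg]]]]] Hin l s c [i [j [k Hc]]] Hls.
  destruct (In_nth xs y (RtoC 0) Hin) as [r [Hr Hy]].
  specialize (Hg i j k l (unitv r s 0 (length xs))).
  unfold monomial in Hg. rewrite prod_unitv in Hg.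
  destruct (Nat.leb_spec 0 r); [|lia]. destruct (Nat.ltb_spec r (0 + length xs)); [|lia]. cbn [andb] in Hg.
  rewrite Nat.sub_0_r, Hy in Hg. rewrite Hc. apply Hg.
  - unfold unitv. rewrite length_map, length_seq. reflexivity.
  - intros [_ [_ [_ [Hl Hs]]]]. destruct Hls as [Hls|Hls]; [lia|].
    rewrite Forall_forall in Hs. apply Hls, Hs. unfold unitv. apply in_map_iff. exists r.
    rewrite Nat.eqb_refl. split; auto. apply in_seq. lia.
Qed.

Theorem mainTheorem7 (p q t a b : C) (n m : nat) (x : list C) :
  (Cmod p < 1)%R -> (1 <= n)%nat -> length x = n ->
  generic p q t a b x ->
  Wpart p q t (repeat m n) x a b = rhs7 p q t a b n m x.
Proof.
  intros Hp Hn Hlen Hgen.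
  pose proof Hgen as [Hq [Ht [Ha [Hb [Hx _]]]]].
  assert (HNZ : forall y, In y x -> NZ p q t a b y) by (intros; eapply generic_NZ; eauto).
  unfold Wpart. rewrite repeat_length.
  replace (repeat m n) with (lamk m n n) by (unfold lamk; now rewrite Nat.sub_diag, app_nil_r).
  rewrite (Wm_lamk p q t a b m n Hq Ht Ha Hb n x) by (auto; rewrite Forall_forall in *; intros y Hy; split; auto).
  assert (Hff : forall e, ff p q t b m e <> 0%R).
  { intros e. destruct x as [|y xs]; [simpl in Hlen; lia|].
    apply eprod_nz. intros j. apply (HNZ y (or_introl eq_refl) 1%Z 0%Z).
    - exists (1 + Z.of_nat j)%Z, e, 0%Z. rewrite Cpowz_add, Cpowz_nat by auto. rewrite !Cpowz_1, !Cpowz_0. ring.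
    - left; lia. }
  destruct (TT_RR p q t b m Hff n) as [HT _]. rewrite HT.
  unfold rhs7. cbv zeta. f_equal. unfold RR. f_equal. apply map_ext. intros j.
  unfold ff. replace (2 * Z.of_nat m)%Z with (Z.of_nat (m + m)) by lia. rewrite !epoch_nat. reflexivity.
Qed.
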